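(* Every sequential Thiele rule and sequential Phragmén satisfy participation for unrepresented voters. The method of equal shares violates participation for unrepresented voters: there exist a profile $A$, a committee size $k$, and a voter $i\in N_A$ such that $W\cap A_i=\emptyset$ for some (indeed every) $W\in f(A,k)$ but $f(A_{-i},k)\succ_i f(A,k)$, where $f$ is the method of equal shares.
   Context: Candidates form a finite set $C$, $|C|=m>1$. An approval profile $A$ has a nonempty finite voter set $N_A$, each $i\in N_A$ having a nonempty ballot $A_i\subseteq C$; $N_A(c)=\{i\in N_A:c\in A_i\}$, $n=|N_A|$, $A_{-i}$ is $A$ with voter $i$ removed. Committees of size $k\in\{1,\dots,m-1\}$ are $k$-subsets of $C$; an ABC voting rule $f$ returns a nonempty set $f(A,k)$ of committees. Preferences: $W\succsim_i W'$ iff $|W\cap A_i|\ge|W'\cap A_i|$, $W\succ_i W'$ iff $>$. Kelly's extension: $X\succsim_i Y$ iff $W\succsim_i W'$ for all $W\in X,W'\in Y$; $X\succ_i Y$ iff $X\succsim_i Y$ and $W\succ_i W'$ for some $W\in X,W'\in Y$. A rule $f$ satisfies participation for unrepresented voters if $f(A_{-i},k)\not\succ_i f(A,k)$ for all profiles $A$ (with $|N_A|\ge2$), sizes $k$, and voters $i\in N_A$ for which some $W\in f(A,k)$ satisfies $W\cap A_i=\emptyset$. All rules below add candidates sequentially and return every committee obtainable under some tie-breaking. Sequential Thiele rule: given $s:\mathbb N_0\to\mathbb Q$ with $s(0)=0$, $s(1)>0$, $s$ nondecreasing and concave, and $\hat s(A,W)=\sum_{i\in N_A}s(|A_i\cap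 W|)$; having chosen $c_1,\dots,c_\ell$, the next candidate is any $x\notin\{c_1,\dots,c_\ell\}$ maximizing $\hat s(A,\{c_1,\dots,c_\ell,x\})$. Sequential Phragmén: voters' budgets start at 0 and grow at unit rate; as soon as the supporters of an unchosen candidate $c$ have total budget 1, such a $c$ is bought and its supporters' budgets reset to 0; repeat until $k$ are bought. Method of equal shares: initial budgets $k/n$, each candidate costs 1. Phase 1: with current budgets $x_r$, let $C_r$ be unchosen candidates whose supporters have total budget $\ge1$; if nonempty, buy any $c\in C_r$ minimizing $\rho(c)$ where $\sum_{i\in N_A(c)}\min(\rho(c),x_r(i))=1$, and each supporter pays $\min(\rho(c),x_r(i))$; stop when $C_r=\emptyset$. Phase 2: run sequential Phragmén starting from the remaining budgets until $k$ candidates are bought. *)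

(* Defs.v *)
From mathcomp Require Import all_boot all_order all_algebra.
Set Implicit Arguments. Unset Strict Implicit. Unset Printing Implicit Defensive.
Import Order.TTheory GRing.Theory Num.Theory.
Local Open Scope ring_scope.

(* Candidates: a finType C.  A profile is a sequence of ballots; voter i is
   the index i < size A, with ballot [ballot A i].  N_A = {0,..,size A - 1}. *)

Definition ballot {C : finType} (A : seq {set C}) (i : nat) : {set C} :=
  nth set0 A i.

Definition wf_profile {C : finType} (A : seq {set C}) : Prop :=
  (0 < size A)%N /\ (forall X, X \in A -> X != set0).

Definition remove_voter {C : finType} (A : seq {set C}) (i : nat) :=
  take i A ++ drop i.+1 A.

Definition committee_of {C : finType} (l : seq C) : {set C} := [set x in l].

(* an ABC rule: f A k W  <->  W \in f(A,k) *)
Definition abc_rule (C : finType) := seq {set C} -> nat -> {set C} -> Prop.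

Definition supporters {C : finType} (A : seq {set C}) (c : C) : seq nat :=
  [seq i <- iota 0 (size A) | c \in ballot A i].

Definition supp_budget {C : finType} (b : nat -> rat) (A : seq {set C}) (c : C) : rat :=
  \sum_(i <- supporters A c) b i.

Definition thiele_fn (s : nat -> rat) : Prop :=
  s 0%N = 0 /\ 0 < s 1%N /\ (forall j, s j <= s j.+1) /\
  (forall j, s j.+2 - s j.+1 <= s j.+1 - s j).

Definition thiele_score {C : finType} (s : nat -> rat) (A : seq {set C}) (W : {set C}) : rat :=
  \sum_(X <- A) s #|X :&: W|.

Inductive thiele_run {C : finType} (s : nat -> rat) (A : seq {set C}) : seq C -> Prop :=
| thiele_nil : thiele_run s A [::]
| thiele_cons l c :
    thiele_run s A l -> c \notin l ->
    (forall c', c' \notin l ->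
       thiele_score s A (committee_of (rcons l c')) <=
       thiele_score s A (committee_of (rcons l c))) ->
    thiele_run s A (rcons l c).

Definition seq_thiele {C : finType} (s : nat -> rat) : abc_rule C :=
  fun A k W => exists l, thiele_run s A l /\ size l = k /\ W = committee_of l.

(* time until the supporters of c have total budget 1 *)
Definition phr_time {C : finType} (A : seq {set C}) (b : nat -> rat) (c : C) : rat :=
  (1 - supp_budget b A c) / (size (supporters A c))%:R.

(* A candidate without supporters never
   reaches budget 1; it is added (arbitrarily) only when no unchosen candidate
   has supporters. *)
Inductive phr_run {C : finType} (A : seq {set C}) (l0 : seq C) (b0 : nat -> rat)
  : seq C -> (nat -> rat) -> Prop :=
| phr_refl : phr_run A l0 b0 l0 b0
| phr_step l b c :
    phr_run A l0 b0 l b -> c \notin l -> supporters A c != [::] ->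
    (forall c', c' \notin l -> supporters A c' != [::] ->
       phr_time A b c <= phr_time A b c') ->
    phr_run A l0 b0 (rcons l c)
      (fun i => if i \in supporters A c then 0 else b i + phr_time A b c)
| phr_step_unsupported l b c :
    phr_run A l0 b0 l b -> c \notin l ->
    (forall c', c' \notin l -> supporters A c' = [::]) ->
    phr_run A l0 b0 (rcons l c) b.

Definition seq_phragmen {C : finType} : abc_rule C :=
  fun A k W => exists l b, phr_run A [::] (fun _ => 0) l b /\
                           size l = k /\ W = committee_of l.

Definition mes_cost {C : finType} (A : seq {set C}) (x : nat -> rat) (c : C) (rho : rat) : rat :=
  \sum_(i <- supporters A c) Num.min rho (x i).

Definition mes_affordable {C : finType} (A : seq {set C}) (x : nat -> rat) (l : seq C) (c : C) : bool :=
  (c \notin l) && (1 <= supp_budget x A c).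

Inductive mes_run {C : finType} (A : seq {set C}) (k : nat) : seq C -> (nat -> rat) -> Prop :=
| mes_start : mes_run A k [::] (fun _ => k%:R / (size A)%:R)
| mes_step l x c rho :
    mes_run A k l x -> mes_affordable A x l c -> mes_cost A x c rho = 1 ->
    (forall c' rho', mes_affordable A x l c' -> mes_cost A x c' rho' = 1 -> rho <= rho') ->
    mes_run A k (rcons l c)
      (fun i => if i \in supporters A c then x i - Num.min rho (x i) else x i).

Definition mes {C : finType} : abc_rule C :=
  fun A k W => exists l x l' y,
    mes_run A k l x /\ (forall c, ~~ mes_affordable A x l c) /\
    phr_run A l x l' y /\ size l' = k /\ W = committee_of l'.

Definition kelly_weak {C : finType} (Ai : {set C}) (X Y : {set C} -> Prop) : Prop :=
  forall W W', X W -> Y W' -> (#|W' :&: Ai| <= #|W :&: Ai|)%N.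

Definition kelly_strict {C : finType} (Ai : {set C}) (X Y : {set C} -> Prop) : Prop :=
  kelly_weak Ai X Y /\
  exists W W', X W /\ Y W' /\ (#|W' :&: Ai| < #|W :&: Ai|)%N.

Definition participation_unrep {C : finType} (f : abc_rule C) : Prop :=
  forall (A : seq {set C}) (k i : nat),
    wf_profile A -> (2 <= size A)%N -> (1 <= k < #|C|)%N -> (i < size A)%N ->
    (exists W, f A k W /\ W :&: ballot A i = set0) ->
    ~ kelly_strict (ballot A i) (f (remove_voter A i) k) (f A k).

(* Main.v *)
Require Import Defs.
From mathcomp Require Import all_boot all_order all_algebra.
From mathcomp Require Import zify ring lra.
Set Implicit Arguments. Unset Strict Implicit. Unset Printing Implicit Defensive.
Import Order.TTheory GRing.Theory Num.Theory.
Local Open Scope ring_scope.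

Section Common.
Variable C : finType.
Implicit Types (A : seq {set C}) (c : C).

Lemma size_remove A i : (i < size A)%N -> size (remove_voter A i) = (size A).-1.
Proof.
move=> hi; rewrite /remove_voter size_cat size_take size_drop hi; lia.
Qed.

Lemma ballot_remove A i j : (i < size A)%N -> (j < (size A).-1)%N ->
  ballot (remove_voter A i) j = ballot A (bump i j).
Proof.
move=> hi hj; rewrite /ballot /remove_voter nth_cat size_take hi /bump.
case: ltnP => hji.
  by rewrite nth_take // leqNgt hji.
rewrite nth_drop; congr nth; rewrite add1n; lia.
Qed.

Lemma mem_supporters A c j : (j \in supporters A c) = (j < size A)%N && (c \in ballot A j).
Proof. by rewrite /supporters mem_filter mem_iota add0n andbC. Qed.

Lemma supp_budget_ord b A c :
  supp_budget b A c = \sum_(j < size A) (if c \in ballot A j then b j else 0).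
Proof.
rewrite /supp_budget /supporters big_filter big_mkcond /=.
have := @big_mkord _ 0 +%R (size A) (fun _ => true) (fun j => if c \in ballot A j then b j else 0).
by rewrite /index_iota subn0.
Qed.

Lemma supp_budget_split b A i c : (i < size A)%N ->
  supp_budget b A c =
  supp_budget (fun j => b (bump i j)) (remove_voter A i) c +
  (if c \in ballot A i then b i else 0).
Proof.
move=> hi; rewrite !supp_budget_ord (bigD1_ord (Ordinal hi)) //= addrC.
congr (_ + _).
rewrite -(big_mkord (fun _ => true) (fun j => if c \in ballot A (bump i j) then b (bump i j) else 0)).
rewrite -(big_mkord (fun _ => true) (fun j => if c \in ballot (remove_voter A i) j then b (bump i j) else 0)).
rewrite size_remove //; apply: eq_big_nat => j /andP[_ hj].
by rewrite ballot_remove.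
Qed.

Lemma sum_ones (s : seq nat) : \sum_(j <- s) (1 : rat) = (size s)%:R.
Proof. elim: s => [|x s IH]; first by rewrite big_nil. by rewrite big_cons IH /= -add1n natrD. Qed.

Lemma size_supp_split A i c : (i < size A)%N ->
  size (supporters A c) = (size (supporters (remove_voter A i) c) + (c \in ballot A i))%N.
Proof.
move=> hi; have := supp_budget_split (fun _ => 1) c hi.
rewrite /supp_budget !sum_ones => h.
apply/eqP; rewrite -(eqr_nat rat) h natrD; apply/eqP; congr (_ + _).
by case: (c \in ballot A i).
Qed.

Lemma supp_budget_ext b1 b2 A c : (forall j, (j < size A)%N -> b1 j = b2 j) ->
  supp_budget b1 A c = supp_budget b2 A c.
Proof.
move=> h; rewrite /supp_budget big_seq_cond [RHS]big_seq_cond; apply: eq_bigr => j.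
by rewrite andbT mem_supporters => /andP[hj _]; apply: h.
Qed.

Lemma mem_supp_remove A i c j : (i < size A)%N -> (j < (size A).-1)%N ->
  (j \in supporters (remove_voter A i) c) = (bump i j \in supporters A c).
Proof.
move=> hi hj; rewrite !mem_supporters size_remove // hj ballot_remove //=.
suff -> : (bump i j < size A)%N by [].
rewrite /bump; case: leqP => h /=; rewrite ?add1n ?add0n; lia.
Qed.

Lemma mem_supp_i A i c : (i < size A)%N -> (i \in supporters A c) = (c \in ballot A i).
Proof. by move=> hi; rewrite mem_supporters hi. Qed.

Lemma exists_max (T : eqType) (s : seq T) (f : T -> rat) : s != [::] ->
  exists2 x, x \in s & forall y, y \in s -> f y <= f x.
Proof.
elim: s => [//|a s IH] _.
case: (altP (s =P [::])) => [->|/IH [x xs hx]].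
  by exists a; rewrite ?inE // => y; rewrite inE => /eqP->.
case: (lerP (f x) (f a)) => h.
  exists a; rewrite ?inE ?eqxx // => y; rewrite inE => /orP[/eqP->//|/hx hy]; exact: le_trans hy h.
exists x; rewrite ?inE ?xs ?orbT // => y; rewrite inE => /orP[/eqP->|/hx//]; exact: ltW.
Qed.

Lemma exists_unchosen (l : seq C) : (size l < #|C|)%N -> exists c, c \notin l.
Proof.
move=> h; apply/existsP; rewrite -negb_forall; apply/negP => /forallP hall.
have : (#|C| <= #|l|)%N.
  apply: subset_leq_card; apply/subsetP => x _; exact: hall.
by move/leq_trans/(_ (card_size l)); rewrite leqNgt h.
Qed.

Lemma committee_rcons (l : seq C) c : committee_of (rcons l c) = c |: committee_of l.
Proof. by apply/setP => x; rewrite /committee_of !inE mem_rcons inE. Qed.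

Lemma committee_disj (l : seq C) (X : {set C}) :
  (committee_of l :&: X == set0) = all (fun c => c \notin X) l.
Proof.
apply/eqP/allP => [h c cl|h].
  apply/negP => cX; have := in_set0 c; rewrite -h !inE cl cX; by [].
apply/setP => x; rewrite !inE; apply/negP => /andP[/h /negP]; by [].
Qed.

Lemma card_pos_has (l : seq C) (X : {set C}) :
  (0 < #|committee_of l :&: X|)%N = has (fun c => c \in X) l.
Proof.
rewrite card_gt0 committee_disj -has_predC; apply: eq_has => c /=; by rewrite negbK.
Qed.

End Common.



Lemma assembly (C : finType) (f : abc_rule C) A k i :
 (forall W, f A k W -> W :&: ballot A i = set0 -> f (remove_voter A i) k W) ->
 (forall W, f (remove_voter A i) k W -> (0 < #|W :&: ballot A i|)%N ->
     exists W', f A k W' /\ (0 < #|W' :&: ballot A i|)%N) ->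
 (exists W, f A k W /\ W :&: ballot A i = set0) ->
 ~ kelly_strict (ballot A i) (f (remove_voter A i) k) (f A k).
Proof.
move=> hfwd hrev [W0 [h0 hd]] [hw [W [W' [hW [hW' hlt]]]]].
have hpos : (0 < #|W :&: ballot A i|)%N by apply: leq_ltn_trans hlt.
have [W'' [h'' hp'']] := hrev _ hW hpos.
have := hw _ _ (hfwd _ h0 hd) h''.
by rewrite hd cards0 leqn0 => /eqP h; rewrite h in hp''.
Qed.

Lemma filter_ne (C : finType) (P : pred C) c : P c -> [seq x <- enum C | P x] != [::].
Proof. move=> cl; apply/eqP => e; have := mem_filter P c (enum C); rewrite e cl mem_enum in_nil; by []. Qed.

Section Thiele.
Variable C : finType.
Variable s : nat -> rat.
Hypothesis hs : thiele_fn s.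
Variable A : seq {set C}.
Variable i : nat.
Hypothesis hi : (i < size A)%N.
Local Notation A' := (remove_voter A i).
Local Notation Ai := (ballot A i).

Lemma s_ge0 j : 0 <= s j.
Proof.
case: hs => h0 [_ [hmon _]]; elim: j => [|j IH]; first by rewrite h0.
exact: le_trans IH (hmon j).
Qed.

Lemma score_split W : thiele_score s A W = thiele_score s A' W + s #|Ai :&: W|.
Proof.
rewrite /thiele_score -{1}(cat_take_drop i A) (drop_nth set0 hi) big_cat big_cons.
rewrite /remove_voter big_cat /ballot.
have E : forall a x b : rat, a + (x + b) = a + b + x by move=> *; ring.
exact: E.
Qed.

Lemma card_disj0 (l : seq C) : all (fun c => c \notin Ai) l -> #|Ai :&: committee_of l| = 0%N.
Proof. by rewrite -committee_disj setIC => /eqP ->; rewrite cards0. Qed.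

Lemma thiele_fwd l : thiele_run s A l -> all (fun c => c \notin Ai) l -> thiele_run s A' l.
Proof.
elim=> [|l0 c hr IH cl hmax]; first by move=> _; constructor.
rewrite all_rcons => /andP[cAi hall].
apply: thiele_cons => //; first exact: IH.
move=> c' hc'.
have h1 := hmax c' hc'.
rewrite [X in _ <= X]score_split card_disj0 ?all_rcons ?cAi ?hall // (proj1 hs) addr0 in h1.
apply: le_trans h1.
by rewrite score_split lerDl s_ge0.
Qed.

Lemma thiele_rev l : thiele_run s A' l ->
  (all (fun c => c \notin Ai) l /\ thiele_run s A l) \/
  exists l', [/\ thiele_run s A l', (size l' <= size l)%N & has (fun c => c \in Ai) l'].
Proof.
elim=> [|l0 c hr IH cl hmax]; first by left; split => //; constructor.
case: IH => [[hall hrA]|[l' [h1 h2 h3]]]; last first.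
  by right; exists l'; split => //; rewrite size_rcons ltnW.
set f := fun x => thiele_score s A (committee_of (rcons l0 x)).
have [M] := @exists_max _ [seq x <- enum C | x \notin l0] f
   (@filter_ne _ (fun x => x \notin l0) c cl).
rewrite mem_filter => /andP[Ml _] hM.
have hM' : forall c', c' \notin l0 -> f c' <= f M.
  by move=> c' hc'; apply: hM; rewrite mem_filter hc' mem_enum.
case: (boolP (M \in Ai)) => MAi.
  right; exists (rcons l0 M); split; last by rewrite has_rcons MAi.
    exact: thiele_cons.
  by rewrite !size_rcons.
have hcA : forall c', c' \notin l0 -> f c' <= f c.
  move=> c' hc'; apply: le_trans (hM' c' hc') _.
  rewrite /f score_split card_disj0 ?all_rcons ?MAi ?hall // (proj1 hs) addr0.
  apply: le_trans (hmax M Ml) _.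
  by rewrite score_split lerDl s_ge0.
have hrc : thiele_run s A (rcons l0 c) by exact: thiele_cons.
case: (boolP (c \in Ai)) => cAi.
  by right; exists (rcons l0 c); split => //; rewrite has_rcons cAi.
by left; split => //; rewrite all_rcons cAi hall.
Qed.

Lemma thiele_extend d l : thiele_run s A l -> (size l + d <= #|C|)%N ->
  exists l', [/\ thiele_run s A l', size l' = (size l + d)%N & {subset l <= l'}].
Proof.
elim: d l => [|d IH] l hr hd; first by exists l; rewrite addn0; split.
have [c0 hc0] : exists c, c \notin l by apply: exists_unchosen; lia.
set f := fun x => thiele_score s A (committee_of (rcons l x)).
have [M] := @exists_max _ [seq x <- enum C | x \notin l] f
   (@filter_ne _ (fun x => x \notin l) c0 hc0).
rewrite mem_filter => /andP[Ml _] hM.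
have hr' : thiele_run s A (rcons l M).
  by apply: thiele_cons => // c' hc'; apply: hM; rewrite mem_filter hc' mem_enum.
have [l' [h1 h2 h3]] := IH _ hr' ltac:(by rewrite size_rcons; lia).
exists l'; split => //; first by rewrite h2 size_rcons addSnnS.
by move=> x xl; apply: h3; rewrite mem_rcons inE xl orbT.
Qed.

End Thiele.

Lemma thiele_part (C : finType) (s : nat -> rat) : thiele_fn s ->
  participation_unrep (@seq_thiele C s).
Proof.
move=> hs A k i _ _ /andP[hk1 hk2] hi.
apply: assembly.
- move=> W [l [hr [hsz ->]]] hd; exists l; split => //.
  by apply: thiele_fwd => //; rewrite -committee_disj hd.
- move=> W [l [hr [hsz ->]]]; rewrite card_pos_has => hh.
  case: (thiele_rev hs hi hr) => [[hall _]|[l' [h1 h2 h3]]].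
    by move/hasP: hh => [x xl xA]; move/allP: hall => /(_ x xl); rewrite xA.
  have [l'' [h4 h5 h6]] := thiele_extend (d := (k - size l')%N) hi h1 ltac:(lia).
  exists (committee_of l''); split.
    exists l''; split; first exact: h4. split; last by []. rewrite h5; lia.
  rewrite card_pos_has; move/hasP: h3 => [x xl xA]; apply/hasP; exists x => //; exact: h6.
Qed.



Lemma exists_min (T : eqType) (s : seq T) (f : T -> rat) : s != [::] ->
  exists2 x, x \in s & forall y, y \in s -> f x <= f y.
Proof.
move=> ne; have [x xs hx] := exists_max (fun y => - f y) ne.
by exists x => // y /hx; rewrite lerN2.
Qed.

Lemma sum_const_seq (s : seq nat) (t : rat) : \sum_(j <- s) t = (size s)%:R * t.
Proof.
elim: s => [|x s IH]; first by rewrite big_nil mul0r.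
by rewrite big_cons IH /= -add1n natrD mulrDl mul1r.
Qed.

Lemma supp_ne_size (T : eqType) (s : seq T) : (s != [::]) = (0 < size s)%N.
Proof. by case: s. Qed.

Section PhrGen.
Variable C : finType.
Variable A : seq {set C}.

Lemma phr_inv l b : phr_run A [::] (fun _ => 0) l b ->
  (forall j, 0 <= b j) /\ (forall c, c \notin l -> supp_budget b A c <= 1).
Proof.
elim=> [|l0 b0 c hr [hb hB] cl hsup hmin|l0 b0 c hr [hb hB] cl hun].
- by split => // c _; rewrite /supp_budget big1.
- have ht : 0 <= phr_time A b0 c.
    rewrite /phr_time divr_ge0 // ?subr_ge0 ?hB //.
  split=> [j|c']; first by case: ifP => // _; rewrite addr_ge0.
  rewrite mem_rcons inE negb_or => /andP[c'c c'l].
  apply: (@le_trans _ _ (\sum_(j <- supporters A c') (b0 j + phr_time A b0 c))).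
    rewrite /supp_budget; apply: ler_sum => j _; case: ifP => // _; exact: addr_ge0.
  rewrite big_split /= sum_const_seq.
  case: (boolP (supporters A c' == [::])) => [/eqP ->|hs'].
    by rewrite /supp_budget big_nil mul0r addr0 ler01.
  have hN : 0 < (size (supporters A c'))%:R :> rat by rewrite ltr0n -supp_ne_size.
  have := hmin c' c'l hs'; rewrite {2}/phr_time => h.
  have : (size (supporters A c'))%:R * phr_time A b0 c <= 1 - supp_budget b0 A c'.
    by rewrite mulrC -ler_pdivlMr.
  rewrite /supp_budget; lra.
- split => // c'; rewrite mem_rcons inE negb_or => /andP[_]; exact: hB.
Qed.

Lemma phr_extend d l b : phr_run A [::] (fun _ => 0) l b -> (size l + d <= #|C|)%N ->
  exists l' b', [/\ phr_run A [::] (fun _ => 0) l' b', size l' = (size l + d)%N & {subset l <= l'}].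
Proof.
elim: d l b => [|d IH] l b hr hd; first by exists l, b; rewrite addn0; split.
have [c0 hc0] : exists c, c \notin l by apply: exists_unchosen; lia.
have [l1 [b1 [hr1 hs1 hsub1]]] : exists l1 b1, [/\ phr_run A [::] (fun _ => 0) l1 b1,
    size l1 = (size l).+1 & {subset l <= l1}].
  case: (boolP (has (fun x => (x \notin l) && (supporters A x != [::])) (enum C))).
    move/hasP=> [x _ hx].
    have [M] := @exists_min _ [seq y <- enum C | (y \notin l) && (supporters A y != [::])]
       (phr_time A b) (@filter_ne _ (fun y => (y \notin l) && (supporters A y != [::])) x hx).
    rewrite mem_filter => /andP[/andP[Ml Ms] _] hM.
    exists (rcons l M), (fun j => if j \in supporters A M then 0 else b j + phr_time A b M); split; last by move=> y yl; rewrite mem_rcons inE yl orbT.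
      apply: phr_step => // c' h1 h2; apply: hM; rewrite mem_filter h1 h2 mem_enum.
      by [].
    by rewrite size_rcons.
  move=> hn; exists (rcons l c0), b; split; last by move=> y yl; rewrite mem_rcons inE yl orbT.
    apply: phr_step_unsupported => // c' hc'; apply/eqP; apply: contraNT hn => hs.
    by apply/hasP; exists c'; rewrite ?mem_enum ?hc'.
  by rewrite size_rcons.
have [l' [b' [h1 h2 h3]]] := IH _ _ hr1 ltac:(by rewrite hs1; lia).
exists l', b'; split => //; first by rewrite h2 hs1 addSnnS.
by move=> x /hsub1; apply: h3.
Qed.

End PhrGen.



Lemma tcmp (B bi : rat) (N : nat) : (0 < N)%N -> 0 <= bi -> B + bi <= 1 ->
  (1 - (B + bi)) / (N + 1)%:R <= (1 - B) / N%:R.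
Proof.
move=> hN hbi hB.
have hN' : 0 < N%:R :> rat by rewrite ltr0n.
set y := (1 - B) / N%:R.
have yn : y * N%:R = 1 - B by rewrite /y divfK // gt_eqF.
have y0 : 0 <= y by rewrite /y divr_ge0 // ?subr_ge0 ?ler0n //; lra.
rewrite ler_pdivrMr ?ltr0n ?addn1 // -addn1 natrD mulrDr mulr1 yn; lra.
Qed.

Section PhrPart.
Variable C : finType.
Variable A : seq {set C}.
Variable i : nat.
Hypothesis hi : (i < size A)%N.
Local Notation A' := (remove_voter A i).
Local Notation Ai := (ballot A i).

Definition corr (b' b : nat -> rat) := forall j, (j < (size A).-1)%N -> b' j = b (bump i j).

Lemma SBc b' b c : corr b' b ->
  supp_budget b A c = supp_budget b' A' c + (if c \in Ai then b i else 0).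
Proof.
move=> hc; rewrite (supp_budget_split _ _ hi); congr (_ + _).
by apply: supp_budget_ext => j; rewrite size_remove // => /hc.
Qed.

Lemma time_eq b' b c : corr b' b -> c \notin Ai -> phr_time A b c = phr_time A' b' c.
Proof.
move=> hc cA; rewrite /phr_time (SBc _ hc) (size_supp_split _ hi) (negbTE cA) addr0 addn0; by [].
Qed.

Lemma time_le b' b c : corr b' b -> c \in Ai -> 0 <= b i -> supp_budget b A c <= 1 ->
  supporters A' c != [::] -> phr_time A b c <= phr_time A' b' c.
Proof.
move=> hc cA hbi hB hs; rewrite /phr_time (SBc _ hc) (size_supp_split _ hi) cA.
rewrite (SBc _ hc) cA in hB.
by apply: tcmp => //; rewrite -supp_ne_size.
Qed.

Lemma supp_A_of_A' c : supporters A' c != [::] -> supporters A c != [::].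
Proof. by rewrite !supp_ne_size (size_supp_split _ hi) => h; apply: leq_trans h (leq_addr _ _). Qed.

Lemma supp_A'_of_A c : c \notin Ai -> supporters A c != [::] -> supporters A' c != [::].
Proof. by move=> cA; rewrite !supp_ne_size (size_supp_split _ hi) (negbTE cA) addn0. Qed.

Lemma corr_upd b' b c t : corr b' b ->
  corr (fun j => if j \in supporters A' c then 0 else b' j + t)
       (fun j => if j \in supporters A c then 0 else b j + t).
Proof. by move=> hc j hj; rewrite (mem_supp_remove _ hi hj) hc. Qed.

Lemma phr_fwd l b : phr_run A [::] (fun _ => 0) l b -> all (fun c => c \notin Ai) l ->
  exists b', phr_run A' [::] (fun _ => 0) l b' /\ corr b' b.
Proof.
move=> hr0; move: (hr0).
elim=> [|l0 b0 c hr IH cl hsup hmin|l0 b0 c hr IH cl hun].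
- by move=> _; exists (fun _ => 0); split => //; constructor.
- rewrite all_rcons => /andP[cA hall].
  have [b' [hr' hc]] := IH hall.
  have [hb hB] := phr_inv hr.
  exists (fun j => if j \in supporters A' c then 0 else b' j + phr_time A' b' c); split.
    apply: phr_step => //; first exact: supp_A'_of_A.
    move=> c' c'l hs'.
    rewrite -(time_eq hc cA); apply: le_trans (hmin c' c'l (supp_A_of_A' hs')) _.
    case: (boolP (c' \in Ai)) => c'A.
      by apply: time_le => //; apply: hB.
    by rewrite (time_eq hc c'A).
  by rewrite -(time_eq hc cA); apply: corr_upd.
- rewrite all_rcons => /andP[cA hall].
  have [b' [hr' hc]] := IH hall.
  exists b'; split => //; apply: phr_step_unsupported => // c' c'l.
  by apply/eqP; rewrite -size_eq0; have := size_supp_split c' hi; rewrite (hun c' c'l) /=; lia.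
Qed.

Lemma phr_rev l b' : phr_run A' [::] (fun _ => 0) l b' ->
  (all (fun c => c \notin Ai) l /\ exists b, phr_run A [::] (fun _ => 0) l b /\ corr b' b) \/
  exists l' b, [/\ phr_run A [::] (fun _ => 0) l' b, (size l' <= size l)%N & has (fun c => c \in Ai) l'].
Proof.
elim=> [|l0 b0 c hr IH cl hsup hmin|l0 b0 c hr IH cl hun].
- by left; split => //; exists (fun _ => 0); split => //; constructor.
- case: IH => [[hall [b [hrA hc]]]|[l' [b1 [h1 h2 h3]]]]; last first.
    by right; exists l', b1; split => //; rewrite size_rcons ltnW.
  have [hb hB] := phr_inv hrA.
  have hsA := supp_A_of_A' hsup.
  have [M] := @exists_min _ [seq y <- enum C | (y \notin l0) && (supporters A y != [::])]
       (phr_time A b) (@filter_ne _ (fun y => (y \notin l0) && (supporters A y != [::])) c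
                          (introT andP (conj cl hsA))).
  rewrite mem_filter => /andP[/andP[Ml Ms] _] hM.
  have hM' : forall c', c' \notin l0 -> supporters A c' != [::] -> phr_time A b M <= phr_time A b c'.
    by move=> c' h1 h2; apply: hM; rewrite mem_filter h1 h2 mem_enum.
  case: (boolP (M \in Ai)) => MA.
    right; exists (rcons l0 M), (fun j => if j \in supporters A M then 0 else b j + phr_time A b M).
    by split; [exact: phr_step | rewrite !size_rcons | rewrite has_rcons MA].
  have hcA : forall c', c' \notin l0 -> supporters A c' != [::] -> phr_time A b c <= phr_time A b c'.
    move=> c' h1 h2; apply: le_trans (hM' c' h1 h2).
    rewrite (time_eq hc MA); apply: le_trans (hmin M Ml (supp_A'_of_A MA Ms)).
    case: (boolP (c \in Ai)) => cA; last by rewrite (time_eq hc cA).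
    by apply: time_le => //; apply: hB.
  have hrc := phr_step hrA cl hsA hcA.
  case: (boolP (c \in Ai)) => cA.
    by right; exists (rcons l0 c), (fun j => if j \in supporters A c then 0 else b j + phr_time A b c); split; [exact: hrc | by [] | rewrite has_rcons cA].
  left; split; first by rewrite all_rcons cA hall.
  exists (fun j => if j \in supporters A c then 0 else b j + phr_time A b c); split; first exact: hrc.
  by rewrite (time_eq hc cA); apply: corr_upd.
- case: IH => [[hall [b [hrA hc]]]|[l' [b1 [h1 h2 h3]]]]; last first.
    by right; exists l', b1; split => //; rewrite size_rcons ltnW.
  case: (boolP (has (fun x => (x \notin l0) && (supporters A x != [::])) (enum C))).
    move/hasP=> [x _ hx].
    have [M] := @exists_min _ [seq y <- enum C | (y \notin l0) && (supporters A y != [::])]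
       (phr_time A b) (@filter_ne _ (fun y => (y \notin l0) && (supporters A y != [::])) x hx).
    rewrite mem_filter => /andP[/andP[Ml Ms] _] hM.
    have MA : M \in Ai.
      apply: contraT => MA; have := supp_A'_of_A MA Ms; by rewrite hun.
    right; exists (rcons l0 M), (fun j => if j \in supporters A M then 0 else b j + phr_time A b M).
    split; [apply: phr_step => // c' h1 h2 | by rewrite !size_rcons | by rewrite has_rcons MA].
    by apply: hM; rewrite mem_filter h1 h2 mem_enum.
  move=> hn.
  have hunA : forall c', c' \notin l0 -> supporters A c' = [::].
    move=> c' hc'; apply/eqP; apply: contraNT hn => hs.
    by apply/hasP; exists c'; rewrite ?mem_enum ?hc'.
  have cA : c \notin Ai.
    apply/negP => cA; have := size_supp_split c hi; rewrite (hunA c cl) (hun c cl) cA; by [].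
  left; split; first by rewrite all_rcons cA hall.
  by exists b; split => //; apply: phr_step_unsupported.
Qed.

End PhrPart.

Lemma phragmen_part (C : finType) : participation_unrep (@seq_phragmen C).
Proof.
move=> A k i _ _ /andP[hk1 hk2] hi.
apply: assembly.
- move=> W [l [b [hr [hsz ->]]]] hd.
  have [b' [hr' _]] := phr_fwd hi hr ltac:(by rewrite -committee_disj hd).
  by exists l, b'.
- move=> W [l [b [hr [hsz ->]]]]; rewrite card_pos_has => hh.
  case: (phr_rev hi hr) => [[hall _]|[l' [b1 [h1 h2 h3]]]].
    by move/hasP: hh => [x xl xA]; move/allP: hall => /(_ x xl); rewrite xA.
  have [l'' [b'' [h4 h5 h6]]] := phr_extend (d := (k - size l')%N) h1 ltac:(lia).
  exists (committee_of l''); split.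
    exists l'', b''; split; first exact: h4. split; last by []. rewrite h5; lia.
  rewrite card_pos_has; move/hasP: h3 => [x xl xA]; apply/hasP; exists x => //; exact: h6.
Qed.



Definition sumF (f : nat -> rat) (s : seq nat) : rat := foldr (fun j acc => f j + acc) 0 s.

Lemma big_sumF (f : nat -> rat) s : \sum_(j <- s) f j = sumF f s.
Proof. by elim: s => [|a s IH]; rewrite ?big_nil ?big_cons ?IH. Qed.

Lemma sumF_ext f g s : f =1 g -> sumF f s = sumF g s.
Proof. by move=> e; elim: s => //= a s ->; rewrite e. Qed.

Lemma min_mono (r R y : rat) : r <= R -> Num.min r y <= Num.min R y.
Proof. move=> h; rewrite !minEle; case: (lerP r y) => h1; case: (lerP R y) => h2; lra. Qed.

Lemma min_strict (r R y : rat) : r < R -> R <= y -> Num.min r y < Num.min R y.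
Proof. move=> h h'; rewrite !minEle; case: (lerP r y) => h1; case: (lerP R y) => h2; lra. Qed.

Lemma sum_strict (f g : nat -> rat) (s : seq nat) :
  (forall j, f j <= g j) -> has (fun j => f j < g j) s -> \sum_(j <- s) f j < \sum_(j <- s) g j.
Proof.
move=> hle; elim: s => [//|a s IH] /=; rewrite !big_cons => /orP[h|/IH h].
  by apply: ltr_leD => //; apply: ler_sum => j _; apply: hle.
exact: ler_ltD.
Qed.

Lemma cost_lower (C : finType) (A : seq {set C}) x c R r :
  mes_cost A x c R = 1 -> has (fun j => R <= x j) (supporters A c) ->
  mes_cost A x c r = 1 -> R <= r.
Proof.
move=> hR hh hr; rewrite leNgt; apply/negP => hlt.
have : mes_cost A x c r < mes_cost A x c R.
  apply: sum_strict; first by move=> j; apply: min_mono; exact: ltW.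
  move/hasP: hh => [j jin hj]; apply/hasP; exists j => //; exact: min_strict.
by rewrite hr hR ltxx.
Qed.

Definition mkA (bal : nat -> 'I_4 -> bool) (n : nat) : seq {set 'I_4} :=
  map (fun j => [set c | bal j c]) (iota 0 n).

Definition sp (bal : nat -> 'I_4 -> bool) n (c : 'I_4) := [seq j <- iota 0 n | bal j c].

Lemma size_mkA bal n : size (mkA bal n) = n.
Proof. by rewrite size_map size_iota. Qed.

Lemma ballot_mkA bal n j c : (j < n)%N -> (c \in ballot (mkA bal n) j) = bal j c.
Proof. by move=> hj; rewrite /ballot /mkA (nth_map 0%N) ?size_iota // nth_iota // inE. Qed.

Lemma supp_mkA bal n c : supporters (mkA bal n) c = sp bal n c.
Proof.
rewrite /supporters /sp size_mkA; apply: eq_in_filter => j.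
by rewrite mem_iota add0n => /andP[_ hj]; rewrite ballot_mkA.
Qed.

Lemma remove_mkA bal n : remove_voter (mkA bal n.+1) 0 = mkA (fun j => bal j.+1) n.
Proof.
have e : iota 1 n = map S (iota 0 n) := iotaDl 1 0 n.
by rewrite /remove_voter /= drop0 /mkA /= e -map_comp.
Qed.

Definition ords4 : seq 'I_4 := [:: @Ordinal 4 0 erefl; @Ordinal 4 1 erefl; @Ordinal 4 2 erefl; @Ordinal 4 3 erefl].

Lemma in_ords4 (c : 'I_4) : c \in ords4.
Proof. by case: c => [[|[|[|[|m]]]] hm]. Qed.

Section Mirror.
Variables (bal : nat -> 'I_4 -> bool) (n : nat).
Local Notation A := (mkA bal n).
Local Notation spc := (sp bal n).

Definition affC (xs : nat -> rat) (l : seq 'I_4) c := (c \notin l) && (1 <= sumF xs (spc c)).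
Definition costC (xs : nat -> rat) c r := sumF (fun j => Num.min r (xs j)) (spc c).
Definition timeC (xs : nat -> rat) c := (1 - sumF xs (spc c)) / (size (spc c))%:R.
Definition updC (xs : nat -> rat) c r := fun j => if j \in spc c then xs j - Num.min r (xs j) else xs j.
Definition pupdC (xs : nat -> rat) c := fun j => if j \in spc c then 0 else xs j + timeC xs c.

Lemma sb_eq x xs c : x =1 xs -> supp_budget x A c = sumF xs (spc c).
Proof. by move=> e; rewrite /supp_budget supp_mkA big_sumF; apply: sumF_ext. Qed.

Lemma aff_eq x xs l c : x =1 xs -> mes_affordable A x l c = affC xs l c.
Proof. by move=> e; rewrite /mes_affordable /affC (sb_eq _ e). Qed.

Lemma cost_eq x xs c r : x =1 xs -> mes_cost A x c r = costC xs c r.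
Proof. by move=> e; rewrite /mes_cost /costC supp_mkA big_sumF; apply: sumF_ext => j; rewrite e. Qed.

Lemma time_eqC x xs c : x =1 xs -> phr_time A x c = timeC xs c.
Proof. by move=> e; rewrite /phr_time /timeC (sb_eq _ e) supp_mkA. Qed.

Lemma upd_eq x xs c r : x =1 xs ->
  (fun j => if j \in supporters A c then x j - Num.min r (x j) else x j) =1 updC xs c r.
Proof. by move=> e j; rewrite /updC supp_mkA !e. Qed.

Lemma pupd_eq x xs c : x =1 xs ->
  (fun j => if j \in supporters A c then 0 else x j + phr_time A x c) =1 pupdC xs c.
Proof. by move=> e j; rewrite /pupdC supp_mkA e (time_eqC _ e). Qed.

Lemma has_supp_eq x xs c (R : rat) : x =1 xs ->
  has (fun j => R <= xs j) (spc c) -> has (fun j => R <= x j) (supporters A c).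
Proof. by move=> e; rewrite supp_mkA; apply: sub_has => j; rewrite e. Qed.

Lemma det_mes x xs l (R : 'I_4 -> rat) (ok : pred 'I_4) :
 x =1 xs ->
 all (fun c => affC xs l c ==> (costC xs c (R c) == 1) && has (fun j => R c <= xs j) (spc c)) ords4 ->
 all (fun c => affC xs l c ==> all (fun c' => affC xs l c' ==> (R c <= R c')) ords4 ==> ok c) ords4 ->
 forall c rho, mes_affordable A x l c -> mes_cost A x c rho = 1 ->
   (forall c' rho', mes_affordable A x l c' -> mes_cost A x c' rho' = 1 -> rho <= rho') ->
   rho = R c /\ ok c.
Proof.
move=> e h1 h2 c rho ha hc hmin.
have lowR : forall c' r, affC xs l c' -> mes_cost A x c' r = 1 -> R c' <= r.
  move=> c' r ha' hr; have /andP[/eqP hc1 hh] := implyP (allP h1 c' (in_ords4 c')) ha'.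
  by apply: cost_lower hr; [rewrite (cost_eq _ _ e) | exact: has_supp_eq hh].
have ha' := ha; rewrite (aff_eq _ _ e) in ha'.
have hcR : mes_cost A x c (R c) = 1.
  by have /andP[/eqP hc1 _] := implyP (allP h1 c (in_ords4 c)) ha'; rewrite (cost_eq _ _ e).
have eR : rho = R c by apply/eqP; rewrite eq_le (hmin c (R c) ha hcR) (lowR c rho ha' hc).
split => //.
apply: (implyP (implyP (allP h2 c (in_ords4 c)) ha')).
apply/allP => c' _; apply/implyP => hc'.
have /andP[/eqP hc1 _] := implyP (allP h1 c' (in_ords4 c')) hc'.
rewrite -eR; apply: hmin; [rewrite (aff_eq _ _ e); exact: hc' | rewrite (cost_eq _ _ e); exact: hc1].
Qed.

Lemma step_mes k l x xs c (R : 'I_4 -> rat) : mes_run A k l x -> x =1 xs ->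
  affC xs l c ->
  all (fun c' => affC xs l c' ==> [&& costC xs c' (R c') == 1, has (fun j => R c' <= xs j) (spc c') & R c <= R c']) ords4 ->
  mes_run A k (rcons l c) (fun j => if j \in supporters A c then x j - Num.min (R c) (x j) else x j).
Proof.
move=> hr e ha h.
have H c' : affC xs l c' -> [&& costC xs c' (R c') == 1, has (fun j => R c' <= xs j) (spc c') & R c <= R c'].
  by move=> hc'; exact: (implyP (allP h c' (in_ords4 c')) hc').
apply: mes_step => //; first by rewrite (aff_eq _ _ e).
  by have /and3P[/eqP hc1 _ _] := H c ha; rewrite (cost_eq _ _ e).
move=> c' rho' ha' hc'; rewrite (aff_eq _ _ e) in ha'.
have /and3P[/eqP hc1 hh hle] := H c' ha'.
apply: le_trans hle _; apply: cost_lower hc'; [rewrite (cost_eq _ _ e) // | exact: has_supp_eq hh].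
Qed.

Lemma step_phr l0 b0 l x xs c : phr_run A l0 b0 l x -> x =1 xs -> c \notin l -> spc c != [::] ->
  all (fun c' => (c' \notin l) && (spc c' != [::]) ==> (timeC xs c <= timeC xs c')) ords4 ->
  phr_run A l0 b0 (rcons l c) (fun j => if j \in supporters A c then 0 else x j + phr_time A x c).
Proof.
move=> hr e cl hs h; apply: phr_step => //; first by rewrite supp_mkA.
move=> c' hc' hs'; rewrite !(time_eqC _ e); rewrite supp_mkA in hs'.
by apply: (implyP (allP h c' (in_ords4 c'))); rewrite hc' hs'.
Qed.

End Mirror.

Lemma phr_size (C : finType) (A : seq {set C}) l0 b0 l b : phr_run A l0 b0 l b ->
  (size l0 <= size l)%N /\ (size l = size l0 -> l = l0 /\ b = b0).
Proof.
elim=> [|l1 b1 c hr [IH _] *|l1 b1 c hr [IH _] *]; first by [].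
- by rewrite size_rcons; split; [exact: leqW | lia].
- by rewrite size_rcons; split; [exact: leqW | lia].
Qed.

Lemma phr_one (C : finType) (A : seq {set C}) l0 b0 l b : phr_run A l0 b0 l b ->
  size l = (size l0).+1 -> exists c, [/\ l = rcons l0 c, c \notin l0 &
   ((supporters A c != [::] /\ forall c', c' \notin l0 -> supporters A c' != [::] -> phr_time A b0 c <= phr_time A b0 c')
    \/ (forall c', c' \notin l0 -> supporters A c' = [::]))].
Proof.
case=> [|l1 b1 c hr cl hs hmin|l1 b1 c hr cl hun]; first lia.
- rewrite size_rcons => /eqP; rewrite eqSS => /eqP /(proj2 (phr_size hr)) [e1 e2]; subst.
  by exists c; split => //; left.
- rewrite size_rcons => /eqP; rewrite eqSS => /eqP /(proj2 (phr_size hr)) [e1 e2]; subst.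
  by exists c; split => //; right.
Qed.

Lemma det_phr bal n l x xs l' y (ok : pred 'I_4) : x =1 xs ->
  phr_run (mkA bal n) l x l' y -> size l' = (size l).+1 ->
  has (fun c => (c \notin l) && (sp bal n c != [::])) ords4 ->
  all (fun c => (c \notin l) && (sp bal n c != [::]) ==>
     all (fun c' => (c' \notin l) && (sp bal n c' != [::]) ==> (timeC bal n xs c <= timeC bal n xs c')) ords4 ==> ok c) ords4 ->
  exists2 c, l' = rcons l c & ok c.
Proof.
move=> e hr hs hhas hall.
have [c [-> cl [[hsup hmin]|hun]]] := phr_one hr hs; last first.
  move/hasP: hhas => [c' _ /andP[hc' hs']]; by rewrite -supp_mkA hun in hs'.
exists c => //.
rewrite supp_mkA in hsup.
apply: (implyP (implyP (allP hall c (in_ords4 c)) _)); first by rewrite cl hsup.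
apply/allP => c' _; apply/implyP => /andP[hc' hs'].
by rewrite -!(time_eqC _ _ _ e); apply: hmin => //; rewrite supp_mkA.
Qed.

Module MesEx.


Definition o0 : 'I_4 := @Ordinal 4 0 erefl.
Definition o1 : 'I_4 := @Ordinal 4 1 erefl.
Definition o2 : 'I_4 := @Ordinal 4 2 erefl.
Definition o3 : 'I_4 := @Ordinal 4 3 erefl.

Definition balA (j : nat) (c : 'I_4) : bool :=
  let v := val c in
  if j == 0%N then v == 0%N
  else if (j < 3)%N then [|| v == 1%N, v == 2%N | v == 3%N]
  else if (j < 6)%N then (v == 0%N) || (v == 1%N)
  else (v == 2%N) || (v == 3%N).
Definition balB (j : nat) (c : 'I_4) : bool := balA j.+1 c.

Definition xsA0 : nat -> rat := fun _ => 3%:R / 10%:R.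
Definition RA0 (c : 'I_4) : rat := match val c with 0%N => 1/4 | 1%N => 1/5 | _ => 1/6 end.
Definition xsA1a := updC balA 10 xsA0 o2 (RA0 o2).
Definition xsA1b := updC balA 10 xsA0 o3 (RA0 o3).
Definition RA1 (c : 'I_4) : rat := match val c with 0%N => 1/4 | 1%N => 11/45 | _ => 1 end.
Definition xsA2a := updC balA 10 xsA1a o1 (RA1 o1).
Definition xsA2b := updC balA 10 xsA1b o1 (RA1 o1).


Local Notation A := (mkA balA 10).
Definition ok23 (c : 'I_4) := (c == o2) || (c == o3).
Definition ok1 (c : 'I_4) := c == o1.

Ltac vmc := vm_compute; reflexivity.




Lemma reachA l x : mes_run A 3 l x ->
  (l = [::] /\ x =1 xsA0) \/ (l = [:: o2] /\ x =1 xsA1a) \/ (l = [:: o3] /\ x =1 xsA1b) \/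
      (l = [:: o2; o1] /\ x =1 xsA2a) \/ (l = [:: o3; o1] /\ x =1 xsA2b).
Proof.
elim=> [|l0 x0 c rho hr IH].
  by left; split => // j; rewrite size_mkA.
case: IH => [[-> e]|[[-> e]|[[-> e]|[[-> e]|[-> e]]]]] ha hc hmin.
- have h1 : all (fun c => affC balA 10 xsA0 [::] c ==> (costC balA 10 xsA0 c (RA0 c) == 1) && has (fun j => RA0 c <= xsA0 j) (sp balA 10 c)) ords4 by vmc.
  have h2 : all (fun c => affC balA 10 xsA0 [::] c ==> all (fun c' => affC balA 10 xsA0 [::] c' ==> (RA0 c <= RA0 c')) ords4 ==> ok23 c) ords4 by vmc.
  have [er oc] := det_mes e h1 h2 ha hc hmin.
  rewrite /ok23 in oc; case/orP: oc => /eqP ec; subst c rho.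
    right; left; split; first by []. move=> j; rewrite (upd_eq _ _ _ _ e); reflexivity.
  right; right; left; split; first by []. move=> j; rewrite (upd_eq _ _ _ _ e); reflexivity.
- have h1 : all (fun c => affC balA 10 xsA1a [:: o2] c ==> (costC balA 10 xsA1a c (RA1 c) == 1) && has (fun j => RA1 c <= xsA1a j) (sp balA 10 c)) ords4 by vmc.
  have h2 : all (fun c => affC balA 10 xsA1a [:: o2] c ==> all (fun c' => affC balA 10 xsA1a [:: o2] c' ==> (RA1 c <= RA1 c')) ords4 ==> ok1 c) ords4 by vmc.
  have [er oc] := det_mes e h1 h2 ha hc hmin.
  move/eqP: (oc : c == o1) => ec; subst c rho.
  right; right; right; left; split; first by []. move=> j; rewrite (upd_eq _ _ _ _ e); reflexivity.
- have h1 : all (fun c => affC balA 10 xsA1b [:: o3] c ==> (costC balA 10 xsA1b c (RA1 c) == 1) && has (fun j => RA1 c <= xsA1b j) (sp balA 10 c)) ords4 by vmc.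
  have h2 : all (fun c => affC balA 10 xsA1b [:: o3] c ==> all (fun c' => affC balA 10 xsA1b [:: o3] c' ==> (RA1 c <= RA1 c')) ords4 ==> ok1 c) ords4 by vmc.
  have [er oc] := det_mes e h1 h2 ha hc hmin.
  move/eqP: (oc : c == o1) => ec; subst c rho.
  right; right; right; right; split; first by []. move=> j; rewrite (upd_eq _ _ _ _ e); reflexivity.
- rewrite (aff_eq _ _ _ _ e) in ha.
  have : all (fun c => ~~ affC balA 10 xsA2a [:: o2; o1] c) ords4 by vmc.
  by move/allP => /(_ c (in_ords4 c)); rewrite ha.
- rewrite (aff_eq _ _ _ _ e) in ha.
  have : all (fun c => ~~ affC balA 10 xsA2b [:: o3; o1] c) ords4 by vmc.
  by move/allP => /(_ c (in_ords4 c)); rewrite ha.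
Qed.

Lemma notin_ballot_mkA bal n j (l : seq 'I_4) : (j < n)%N ->
  all (fun c => c \notin ballot (mkA bal n) j) l = all (fun c => ~~ bal j c) l.
Proof. by move=> hj; apply: eq_all => c; rewrite ballot_mkA. Qed.

Lemma in_ballot_mkA bal n j (l : seq 'I_4) : (j < n)%N ->
  has (fun c => c \in ballot (mkA bal n) j) l = has (fun c => bal j c) l.
Proof. by move=> hj; apply: eq_has => c; rewrite ballot_mkA. Qed.

Lemma mesA_all W : mes A 3 W -> W :&: ballot A 0 = set0.
Proof.
move=> [l [x [l' [y [hr [hterm [hp [hs ->]]]]]]]].
case: (reachA hr) hterm hp => [[-> e]|[[-> e]|[[-> e]|[[-> e]|[-> e]]]]] hterm hp.
- have := hterm o0; rewrite (aff_eq _ _ _ _ e); by vm_compute.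
- have := hterm o0; rewrite (aff_eq _ _ _ _ e); by vm_compute.
- have := hterm o0; rewrite (aff_eq _ _ _ _ e); by vm_compute.
- have hh : has (fun c => (c \notin [:: o2; o1]) && (sp balA 10 c != [::])) ords4 by vmc.
  have ha : all (fun c => (c \notin [:: o2; o1]) && (sp balA 10 c != [::]) ==>
     all (fun c' => (c' \notin [:: o2; o1]) && (sp balA 10 c' != [::]) ==> (timeC balA 10 xsA2a c <= timeC balA 10 xsA2a c')) ords4 ==> (c == o3)) ords4 by vmc.
  have [c -> /eqP ->] := det_phr e hp hs hh ha.
  apply/eqP; rewrite committee_disj notin_ballot_mkA //; vmc.
- have hh : has (fun c => (c \notin [:: o3; o1]) && (sp balA 10 c != [::])) ords4 by vmc.
  have ha : all (fun c => (c \notin [:: o3; o1]) && (sp balA 10 c != [::]) ==>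
     all (fun c' => (c' \notin [:: o3; o1]) && (sp balA 10 c' != [::]) ==> (timeC balA 10 xsA2b c <= timeC balA 10 xsA2b c')) ords4 ==> (c == o2)) ords4 by vmc.
  have [c -> /eqP ->] := det_phr e hp hs hh ha.
  apply/eqP; rewrite committee_disj notin_ballot_mkA //; vmc.
Qed.

Lemma mesA_ex : mes A 3 (committee_of [:: o2; o1; o3]).
Proof.
have e0 : (fun _ => 3%:R / (size A)%:R) =1 xsA0 by move=> j; rewrite size_mkA.
have c1 : affC balA 10 xsA0 [::] o2 by vmc.
have c2 : all (fun c' => affC balA 10 xsA0 [::] c' ==> [&& costC balA 10 xsA0 c' (RA0 c') == 1, has (fun j => RA0 c' <= xsA0 j) (sp balA 10 c') & RA0 o2 <= RA0 c']) ords4 by vmc.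
have r1 := step_mes (mes_start A 3) e0 c1 c2.
have e1 : _ =1 xsA1a := upd_eq _ _ _ _ e0.
have d1 : affC balA 10 xsA1a [:: o2] o1 by vmc.
have d2 : all (fun c' => affC balA 10 xsA1a [:: o2] c' ==> [&& costC balA 10 xsA1a c' (RA1 c') == 1, has (fun j => RA1 c' <= xsA1a j) (sp balA 10 c') & RA1 o1 <= RA1 c']) ords4 by vmc.
have r2 := step_mes r1 e1 d1 d2.
have e2 : _ =1 xsA2a := upd_eq _ _ _ _ e1.
have f1 : all (fun c => ~~ affC balA 10 xsA2a [:: o2; o1] c) ords4 by vmc.
have f2 : o3 \notin [:: o2; o1] by vmc.
have f3 : sp balA 10 o3 != [::] by vmc.
have f4 : all (fun c' => (c' \notin [:: o2; o1]) && (sp balA 10 c' != [::]) ==> (timeC balA 10 xsA2a o3 <= timeC balA 10 xsA2a c')) ords4 by vmc.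
have p1 := step_phr (phr_refl _ _ _) e2 f2 f3 f4.
do 4 eexists; split; first exact: r2.
split; first by move=> c; rewrite (aff_eq _ _ _ _ e2); exact: (allP f1 c (in_ords4 c)).
split; first exact: p1.
by split.
Qed.

Definition xsB0 : nat -> rat := fun _ => 3%:R / 9%:R.
Definition RB0 (c : 'I_4) : rat := match val c with 0%N => 1/3 | 1%N => 1/5 | _ => 1/6 end.
Definition xsB1 := updC balB 9 xsB0 o2 (RB0 o2).
Definition RB1 (c : 'I_4) : rat := match val c with 0%N => 1/3 | 1%N => 2/9 | _ => 1/6 end.
Definition xsB2 := updC balB 9 xsB1 o3 (RB1 o3).
Definition RB2 (c : 'I_4) : rat := match val c with 0%N => 1/3 | 1%N => 1/3 | _ => 1 end.
Definition xsB3 := updC balB 9 xsB2 o0 (RB2 o0).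

Local Notation B := (mkA balB 9).

Lemma mesB_ex : mes B 3 (committee_of [:: o2; o3; o0]).
Proof.
have e0 : (fun _ => 3%:R / (size B)%:R) =1 xsB0 by move=> j; rewrite size_mkA.
have c1 : affC balB 9 xsB0 [::] o2 by vmc.
have c2 : all (fun c' => affC balB 9 xsB0 [::] c' ==> [&& costC balB 9 xsB0 c' (RB0 c') == 1, has (fun j => RB0 c' <= xsB0 j) (sp balB 9 c') & RB0 o2 <= RB0 c']) ords4 by vmc.
have r1 := step_mes (mes_start B 3) e0 c1 c2.
have e1 : _ =1 xsB1 := upd_eq _ _ _ _ e0.
have d1 : affC balB 9 xsB1 [:: o2] o3 by vmc.
have d2 : all (fun c' => affC balB 9 xsB1 [:: o2] c' ==> [&& costC balB 9 xsB1 c' (RB1 c') == 1, has (fun j => RB1 c' <= xsB1 j) (sp balB 9 c') & RB1 o3 <= RB1 c']) ords4 by vmc.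
have r2 := step_mes r1 e1 d1 d2.
have e2 : _ =1 xsB2 := upd_eq _ _ _ _ e1.
have g1 : affC balB 9 xsB2 [:: o2; o3] o0 by vmc.
have g2 : all (fun c' => affC balB 9 xsB2 [:: o2; o3] c' ==> [&& costC balB 9 xsB2 c' (RB2 c') == 1, has (fun j => RB2 c' <= xsB2 j) (sp balB 9 c') & RB2 o0 <= RB2 c']) ords4 by vmc.
have r3 := step_mes r2 e2 g1 g2.
have e3 : _ =1 xsB3 := upd_eq _ _ _ _ e2.
have f1 : all (fun c => ~~ affC balB 9 xsB3 [:: o2; o3; o0] c) ords4 by vmc.
do 4 eexists; split; first exact: r3.
split; first by move=> c; rewrite (aff_eq _ _ _ _ e3); exact: (allP f1 c (in_ords4 c)).
split; first exact: (phr_refl _ _ _).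
by split.
Qed.

Lemma mes_part : exists (C : finType), (1 < #|C|)%N /\
     exists (A : seq {set C}) (k i : nat),
       [/\ wf_profile A, (2 <= size A)%N, (1 <= k < #|C|)%N & (i < size A)%N] /\
       (exists W, mes A k W /\ W :&: ballot A i = set0) /\
       (forall W, mes A k W -> W :&: ballot A i = set0) /\
       kelly_strict (ballot A i) (mes (remove_voter A i) k) (mes A k).
Proof.
exists ('I_4 : finType); split; first by rewrite card_ord.
exists A, 3%N, 0%N; split.
  split; rewrite ?size_mkA ?card_ord //; split; first by rewrite size_mkA.
  move=> X /mapP [j jin ->]; apply/set0Pn.
  have hw : all (fun j => has (fun c => balA j c) ords4) (iota 0 10) by vmc.
  have /hasP [c _ hc] := allP hw j jin.
  by exists c; rewrite inE.
split; first by exists (committee_of [:: o2; o1; o3]); split; [exact: mesA_ex | exact: mesA_all mesA_ex].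
split; first exact: mesA_all.
rewrite (remove_mkA balA 9); split.
  by move=> W W' _ hW'; rewrite (mesA_all hW') cards0.
exists (committee_of [:: o2; o3; o0]), (committee_of [:: o2; o1; o3]); split; first exact: mesB_ex.
split; first exact: mesA_ex.
rewrite (mesA_all mesA_ex) cards0 card_pos_has in_ballot_mkA //; vmc.
Qed.

End MesEx.

Local Close Scope ring_scope.

Theorem proposition1 :
  (forall (C : finType), (1 < #|C|)%N ->
     forall s : nat -> rat, thiele_fn s -> participation_unrep (@seq_thiele C s)) /\
  (forall (C : finType), (1 < #|C|)%N -> participation_unrep (@seq_phragmen C)) /\
  (exists (C : finType), (1 < #|C|)%N /\
     exists (A : seq {set C}) (k i : nat),
       [/\ wf_profile A, (2 <= size A)%N, (1 <= k < #|C|)%N & (i < size A)%N] /\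
       (exists W, mes A k W /\ W :&: ballot A i = set0) /\
       (forall W, mes A k W -> W :&: ballot A i = set0) /\
       kelly_strict (ballot A i) (mes (remove_voter A i) k) (mes A k)).
Proof.
split; first by move=> C _ s hs; exact: thiele_part.
split; first by move=> C _; exact: phragmen_part.
exact: MesEx.mes_part.
Qed.
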